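(* Let $A_1,\dots,A_m\in\mathbb R^{n\times n}$ and $z\in\mathbb R^n$. For any integer $l\ge1$ let $h^l:\mathbb R^{n\circ l}\to\mathbb R$, \[ h^l(\mathbf w)=\sum_{a_1,\dots,a_l\in[m]}\Big(\sum_{i,j\in[n]^l}\Big(\prod_{k=1}^l (A_{a_k})_{i_kj_k}\Big)\big(w_{i_1\dots i_l}w_{j_1\dots j_l}-z_{i_1}\cdots z_{i_l}z_{j_1}\cdots z_{j_l}\big)\Big)^2 . \] Then for every $l\ge1$, $z^{\otimes l}$ is a second-order point of $h^l$, i.e. $\nabla h^l(z^{\otimes l})=0$ and $\nabla^2h^l(z^{\otimes l})\succeq0$; no RSC or RSS assumption is needed.
   Context: $\mathbb R^{n\circ l}$ denotes $l$-way tensors of size $n\times\cdots\times n$; $z^{\otimes l}$ is the tensor with entries $z_{i_1}\cdots z_{i_l}$. $z$ is the ground truth of the rank-1 matrix sensing problem $\min_{x\in\mathbb R^n}\sum_a\langle A_a,xx^\top-zz^\top\rangle^2$, and $h^l$ is its lifted version. *)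

(* Defs.v *)
From HB Require Import structures.
From mathcomp Require Import all_boot all_order all_algebra.
From mathcomp Require Import all_classical all_reals all_analysis.
Set Implicit Arguments. Unset Strict Implicit. Unset Printing Implicit Defensive.
Import Order.TTheory GRing.Theory Num.Theory.
Import numFieldNormedType.Exports.
Local Open Scope ring_scope.

Definition midx (n l : nat) := {ffun 'I_l -> 'I_n}.

(* The space R^{n o l} of l-way tensors, represented as row vectors indexed
   (via enum_rank) by multi-indices. *)
Definition tdim (n l : nat) : nat := #|{: midx n l}|.
Definition tensor (R : realType) (n l : nat) := 'rV[R]_(tdim n l).

Definition tentry (R : realType) (n l : nat) (w : tensor R n l) (i : midx n l) : R :=
  w 0 (enum_rank i).

Definition tpow (R : realType) (n l : nat) (z : 'rV[R]_n) : tensor R n l :=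
  \row_(p < tdim n l) \prod_(k < l) z 0 (enum_val p k).

Definition hl (R : realType) (n m l : nat) (A : 'I_m -> 'M[R]_n) (z : 'rV[R]_n)
    (w : tensor R n l) : R :=
  \sum_(a : {ffun 'I_l -> 'I_m})
    (\sum_(i : midx n l) \sum_(j : midx n l)
       (\prod_(k < l) A (a k) (i k) (j k)) *
       (tentry w i * tentry w j
        - (\prod_(k < l) z 0 (i k)) * (\prod_(k < l) z 0 (j k)))) ^+ 2.

Definition ebasis (R : realType) (N : nat) (p : 'I_N) : 'rV[R]_N := delta_mx 0 p.

Definition gradient (R : realType) (N : nat) (f : 'rV[R]_N -> R) (x : 'rV[R]_N)
  : 'rV[R]_N := \row_(p < N) ('D_(ebasis R p) f) x.

Definition hessian (R : realType) (N : nat) (f : 'rV[R]_N -> R) (x : 'rV[R]_N)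
  : 'M[R]_N := \matrix_(p < N, q < N) ('D_(ebasis R p) ('D_(ebasis R q) f)) x.

Definition psd (R : realType) (N : nat) (H : 'M[R]_N) : Prop :=
  forall v : 'rV[R]_N, 0 <= (v *m H *m v^T) 0 0.

Definition second_order_point (R : realType) (N : nat) (f : 'rV[R]_N -> R)
  (x : 'rV[R]_N) : Prop :=
  gradient f x = 0 /\ psd (hessian f x).

(* Main.v *)
Require Import Defs.
From HB Require Import structures.
From mathcomp Require Import all_boot all_order all_algebra.
From mathcomp Require Import all_classical all_reals all_analysis.
From mathcomp Require Import ring.
Import Order.TTheory GRing.Theory Num.Theory.
Import numFieldNormedType.Exports.
Set Implicit Arguments. Unset Strict Implicit. Unset Printing Implicit Defensive.
Local Open Scope ring_scope.

Section Calc.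
Variables (R : realType) (N : nat).
Notation V := 'rV[R]_N.

Lemma isd_coord (x v : V) (p : 'I_N) :
  is_derive x v (fun w : V => w 0 p) (v 0 p).
Proof.
apply: DeriveDef; first exact/diff_derivable/differentiable_coord.
have := @derive_mx R _ 1 N id x v (@derivable_id R _ x v).
rewrite derive_id => /matrixP/(_ 0 p); rewrite mxE => <-.
by [].
Qed.

Lemma isd_ext (f g : V -> R) x v df :
  (forall w, f w = g w) -> is_derive x v f df -> is_derive x v g df.
Proof. by move=> fg; have -> : f = g by apply/funext. Qed.

Lemma isd_cst (c : R) x v : is_derive x v (fun _ : V => c) 0.
Proof. exact: is_derive_cst. Qed.

Lemma isd_add (f g : V -> R) x v df dg :
  is_derive x v f df -> is_derive x v g dg ->
  is_derive x v (fun w => f w + g w) (df + dg).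
Proof. by move=> Hf Hg; apply: (@isd_ext (f + g)). Qed.

Lemma isd_sub (f g : V -> R) x v df dg :
  is_derive x v f df -> is_derive x v g dg ->
  is_derive x v (fun w => f w - g w) (df - dg).
Proof. by move=> Hf Hg; apply: (@isd_ext (f - g)). Qed.

Lemma isd_mul (f g : V -> R) x v df dg :
  is_derive x v f df -> is_derive x v g dg ->
  is_derive x v (fun w => f w * g w) (f x * dg + g x * df).
Proof. by move=> Hf Hg; apply: (@isd_ext (f * g)). Qed.

Lemma isd_sum (I : finType) (F : I -> V -> R) dF x v :
  (forall i, is_derive x v (F i) (dF i)) ->
  is_derive x v (fun w => \sum_i F i w) (\sum_i dF i).
Proof.
move=> H; apply: (@isd_ext (\sum_i F i)).
  by move=> w; rewrite fct_sumE.
by elim/big_ind2: _ => // *; [exact: is_derive_cst | exact: is_deriveD].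
Qed.
Lemma isd_eq (f : V -> R) x v df dg :
  is_derive x v f df -> df = dg -> is_derive x v f dg.
Proof. by move=> H <-. Qed.
End Calc.

Section Main.
Variables (R : realType) (n m l : nat) (A : 'I_m -> 'M[R]_n) (z : 'rV[R]_n).
Notation N := (tdim n l).
Notation V := 'rV[R]_N.
Notation I := (midx n l).
Notation Ia := {ffun 'I_l -> 'I_m}.

Definition C (a : Ia) (i j : I) : R := \prod_(k < l) A (a k) (i k) (j k).
Definition Z (i : I) : R := \prod_(k < l) z 0 (i k).
Definition Q (a : Ia) (w : V) : R :=
  \sum_(i : I) \sum_(j : I) C a i j * (tentry w i * tentry w j - Z i * Z j).
Definition DQ (a : Ia) (x v : V) : R :=
  \sum_(i : I) \sum_(j : I) C a i j * (tentry x i * tentry v j + tentry x j * tentry v i).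

Lemma isd_t (x v : V) (i : I) : is_derive x v (fun w : V => tentry w i) (tentry v i).
Proof. exact: isd_coord. Qed.

Lemma isd_Q a (x v : V) : is_derive x v (Q a) (DQ a x v).
Proof.
apply: isd_sum => i; apply: isd_sum => j.
apply: isd_eq.
  exact: (isd_mul (isd_cst _ _ _) (isd_sub (isd_mul (isd_t _ _ _) (isd_t _ _ _)) (isd_cst _ _ _))).
rewrite /=; by rewrite mulr0 addr0 subr0 addrC.
Qed.

Lemma isd_DQ a (x u v : V) : is_derive x u (fun y => DQ a y v) (DQ a u v).
Proof.
apply: isd_sum => i; apply: isd_sum => j.
apply: isd_eq.
  exact: (isd_mul (isd_cst _ _ _) (isd_add (isd_mul (isd_t _ _ _) (isd_cst _ _ _)) (isd_mul (isd_t _ _ _) (isd_cst _ _ _)))).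
rewrite /=; by rewrite !mulr0 !add0r addr0 ![tentry v _ * _]mulrC.
Qed.

Lemma hlE (w : V) : hl A z w = \sum_(a : Ia) Q a w ^+ 2.
Proof. by []. Qed.

Lemma isd_h (x v : V) :
  is_derive x v (hl A z (l:=l)) (\sum_(a : Ia) 2 * Q a x * DQ a x v).
Proof.
apply: (@isd_ext _ _ (fun w => \sum_(a : Ia) Q a w * Q a w)).
  by move=> w; rewrite hlE; apply: eq_bigr => a _; rewrite expr2.
apply: isd_sum => a; apply: isd_eq.
  exact: (isd_mul (isd_Q _ _ _) (isd_Q _ _ _)).
rewrite /=; by rewrite -mulrA mulr2n mulrDl !mul1r.
Qed.

Lemma Dh (x v : V) :
  'D_v (hl A z (l:=l)) x = \sum_(a : Ia) 2 * Q a x * DQ a x v.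
Proof. by case: (isd_h x v). Qed.

Lemma isd_G (x u v : V) :
  is_derive x u (fun y => \sum_(a : Ia) 2 * Q a y * DQ a y v)
    (\sum_(a : Ia) (2 * Q a x * DQ a u v + DQ a x v * (2 * DQ a x u))).
Proof.
apply: isd_sum => a; apply: isd_eq.
  exact: (isd_mul (isd_mul (isd_cst _ _ _) (isd_Q _ _ _)) (isd_DQ _ _ _ _)).
rewrite /=; by rewrite mulr0 addr0.
Qed.

Lemma Qz a : Q a (tpow l z) = 0.
Proof.
apply: big1 => i _; apply: big1 => j _.
by rewrite /tentry /tpow !mxE !enum_rankK subrr mulr0.
Qed.

Lemma quad (J : finType) (v : 'I_N -> R) (d : J -> 'I_N -> R) :
  \sum_(q < N) (\sum_(p < N) v p * \sum_(a : J) 2 * d a q * d a p) * v q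
  = \sum_(a : J) 2 * (\sum_(p < N) v p * d a p) ^+ 2.
Proof.
transitivity (\sum_(q < N) \sum_(p < N) \sum_(a : J) 2 * (v p * d a p) * (v q * d a q)).
  apply: eq_bigr => q _; rewrite mulr_suml; apply: eq_bigr => p _.
  rewrite mulr_sumr mulr_suml; apply: eq_bigr => a _.
  by ring.
rewrite exchange_big /=; under eq_bigr do rewrite exchange_big /=.
rewrite exchange_big /=; apply: eq_bigr => a _.
rewrite expr2 mulr_suml mulr_sumr; apply: eq_bigr => p _.
rewrite !mulr_sumr; apply: eq_bigr => q _.
by ring.
Qed.
End Main.

Unset Implicit Arguments.
Theorem theorem5p7 (R : realType) (n m : nat) (A : 'I_m -> 'M[R]_n)
  (z : 'rV[R]_n) (l : nat) :
  (0 < l)%N ->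
  second_order_point (hl A z (l:=l)) (tpow l z).
Proof.
move=> _; split.
  apply/rowP => p; rewrite !mxE Dh; apply: big1 => a _.
  by rewrite Qz mulr0 mul0r.
move=> v.
set x0 := tpow l z.
have HH : hessian (hl A z (l:=l)) x0 =
  \matrix_(p, q) \sum_(a : {ffun 'I_l -> 'I_m})
     2 * DQ A a x0 (ebasis R q) * DQ A a x0 (ebasis R p).
  apply/matrixP => p q; rewrite !mxE.
  have -> : 'D_(ebasis R q) (hl A z (l:=l)) =
     (fun y => \sum_(a : {ffun 'I_l -> 'I_m}) 2 * Q A z a y * DQ A a y (ebasis R q)).
    by apply/funext => y; rewrite Dh.
  case: (isd_G A z x0 (ebasis R p) (ebasis R q)) => _ ->.
  apply: eq_bigr => a _; rewrite Qz; ring.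
rewrite HH !mxE.
under eq_bigr do rewrite !mxE.
under eq_bigr do under eq_bigr do rewrite !mxE.
rewrite (quad (fun p => v 0 p) (fun a p => DQ A a x0 (ebasis R p))).
by apply: sumr_ge0 => a _; rewrite mulr_ge0 // sqr_ge0.
Qed.
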